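(* With the notation of the context, let $$\rho^*=\frac{\eta T}{W\left(\lambda\gamma s_0\eta^2Te^{(\nu-\frac{\eta^2}{2})T}\right)}\frac{\mu-r}{\sigma}.$$ If $\rho^*\le-1$, then $d$ is increasing on $(-1,1)$. If $\rho^*\ge1$, then $d$ is decreasing on $(-1,1)$. If $-1<\rho^*<1$, then $d$ is decreasing on $(-1,\rho^* )$ and increasing on $(\rho^*,1)$, $$d(\rho^* )=d(0)-e^{-rT}\frac{(\mu-r)^2T}{2\gamma\sigma^2},\qquad g(\rho^* )=g(0)-e^{-rT}\frac{(\mu-r)^2T}{2\gamma\sigma^2},$$ and moreover $$\inf_{\rho\in(-1,1)}p(\rho)\ge d(0)-\frac{e^{-rT}}{2\gamma}\left(\frac{\mu-r}{\sigma}\right)^2T,\qquad \inf_{\rho\in(-1,1)}V_\rho(x_0,s_0,\lambda)\ge-\frac1\gamma\exp\left(-\gamma e^{rT}(x_0+d(0))\right).$$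
   Context: Fix $T>0$, $r,\nu,\mu,x_0\in\mathbb R$, $\eta>0$, $\sigma>0$, $s_0>0$, $\lambda>0$, $\gamma>0$; $N$ is a standard Gaussian random variable; $W$ is the Lambert function (inverse of $x\in(-1,\infty)\mapsto xe^x$). For $\rho\in(-1,1)$ let $\theta(\rho)=\lambda\gamma(1-\rho^2)$, $w(\rho)=W\left(s_0\eta^2Te^{(\nu-\eta\rho\frac{\mu-r}{\sigma}-\frac{\eta^2}{2})T}\theta(\rho)\right)$, $$d(\rho)=\frac{\lambda e^{-rT}}{\theta(\rho)\eta^2T}w(\rho)\left(1+\frac{w(\rho)}2\right),\qquad g(\rho)=\frac{\lambda e^{-rT}}{\theta(\rho)}\frac{w(\rho)}{\eta^2T}\left(e^{\frac{\eta^2}{2}T}+\frac{w(\rho)}2\right),$$ $$p(\rho)=-\frac{e^{-rT}}{\gamma(1-\rho^2)}\ln\mathbb E\exp\left(-\theta(\rho)s_0e^{(\nu-\eta\rho\frac{\mu-r}{\sigma}-\frac{\eta^2}{2})T}e^{\eta\sqrt TN}\right),$$ $$V_\rho(x_0,s_0,\lambda)=-\frac1\gamma\exp\left(-\gamma e^{rT}(x_0+p(\rho))-\frac{(\mu-r)^2}{2\sigma^2}T\right).$$ Here $p(\rho)$ and $V_\rho$ are the asking reservation price and the value function of an exponential-utility agent receiving $\lambda$ units of a non-traded stock ($dS=S(\nu dt+\eta dZ)$), hedging with a traded asset ($dP=P(\mu dt+\sigma dB)$) of correlation $\rho$, bond rate $r$. *)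

(* Defs.v *)
From HB Require Import structures.
From mathcomp Require Import all_boot all_order all_algebra.
From mathcomp Require Import all_classical all_reals all_analysis.
Set Implicit Arguments. Unset Strict Implicit. Unset Printing Implicit Defensive.
Import Order.TTheory GRing.Theory Num.Theory.
Local Open Scope classical_set_scope.
Local Open Scope ring_scope.

Section Defs.
Variable R : realType.

(* Lambert W function: inverse of w in (-1, oo) |-> w e^w (defined on (-1/e, oo));
   outside its domain it returns the default 0 (never used here). *)
Definition lambertW (x : R) : R :=
  xget 0 [set w : R | -1 < w /\ w * expR w = x].

Variables (T r nu mu eta sigma s0 lambda gamma : R).

Definition mpr : R := (mu - r) / sigma.

Definition theta (rho : R) : R := lambda * gamma * (1 - rho ^+ 2).

Definition drift (rho : R) : R := (nu - eta * rho * mpr - eta ^+ 2 / 2) * T.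

Definition wfun (rho : R) : R :=
  lambertW (s0 * eta ^+ 2 * T * expR (drift rho) * theta rho).

Definition dfun (rho : R) : R :=
  lambda * expR (- r * T) / (theta rho * eta ^+ 2 * T) * wfun rho * (1 + wfun rho / 2).

Definition gfun (rho : R) : R :=
  lambda * expR (- r * T) / theta rho * (wfun rho / (eta ^+ 2 * T))
    * (expR (eta ^+ 2 / 2 * T) + wfun rho / 2).

Definition expect_term (rho : R) : R :=
  fine (\int[normal_prob 0 1]_x
          (expR (- (theta rho * s0 * expR (drift rho) * expR (eta * Num.sqrt T * x))))%:E)%E.

Definition pfun (rho : R) : R :=
  - (expR (- r * T) / (gamma * (1 - rho ^+ 2))) * ln (expect_term rho).

Definition Vfun (x0 rho : R) : R :=
  - (1 / gamma) * expR (- gamma * expR (r * T) * (x0 + pfun rho) - mpr ^+ 2 / 2 * T).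

Definition rhostar : R :=
  eta * T / lambertW (lambda * gamma * s0 * eta ^+ 2 * T * expR ((nu - eta ^+ 2 / 2) * T)) * mpr.

End Defs.

(* Main.v *)
Require Import Defs.
From HB Require Import structures.
From mathcomp Require Import all_boot all_order all_algebra.
From mathcomp Require Import all_classical all_reals all_analysis.
From mathcomp Require Import ring lra measurable_realfun.
Import Order.TTheory GRing.Theory Num.Theory.
Import numFieldTopology.Exports numFieldNormedType.Exports.
Local Open Scope ring_scope.

Section S1.
Variable R : realType.

Lemma lambertW_spec (x : R) : 0 < x ->
  0 < lambertW x /\ lambertW x * expR (lambertW x) = x.
Proof.
move=> x0.
have ex : exists w : R, -1 < w /\ w * expR w = x.
  have H : continuous (fun t : R => t * expR t).
    move=> t; apply: continuousM; [exact: cvg_id| exact: continuous_expR].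
  have [c _ fc] : exists2 c, c \in `[0, x] & (fun t : R => t * expR t) c = x.
    apply: IVT; first exact: ltW.
      exact: continuous_subspaceT.
    rewrite mul0r.
    have h : x <= x * expR x.
      rewrite ler_peMr ?(ltW x0)//; have := expR_ge1Dx x; lra.
    by rewrite ge_min le_max (ltW x0) h/= orbT.
  exists c; split=> //.
  have : 0 < c * expR c by rewrite fc.
  rewrite pmulr_lgt0 ?expR_gt0// => c0; lra.
have [h1 h2] := xgetPex 0 ex.
rewrite /lambertW; split=> //.
have : 0 < xget 0 [set w | -1 < w /\ w * expR w = x] * expR (xget 0 [set w | -1 < w /\ w * expR w = x]) by rewrite h2.
by rewrite pmulr_lgt0 ?expR_gt0.
Qed.

Lemma xexp_le (u w : R) : 0 < u -> 0 < w -> u * expR u <= w * expR w -> u <= w.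
Proof.
move=> u0 w0 h; rewrite leNgt; apply/negP => wu.
have : w * expR w < u * expR u.
  apply: (@lt_le_trans _ _ (u * expR w)).
    by rewrite ltr_pM2r ?expR_gt0.
  by rewrite ler_pM2l // ler_expR ltW.
by rewrite ltNge h.
Qed.

Lemma xexp_inj (u w : R) : 0 < u -> 0 < w -> u * expR u = w * expR w -> u = w.
Proof.
move=> u0 w0 h; apply/eqP; rewrite eq_le (@xexp_le u w u0 w0) ?h // (@xexp_le w u w0 u0) ?h //.
Qed.
End S1.

Section S2.
Variable R : realType.

Lemma core (ca q ya yb a b al : R) : ya = 1 - a ^+ 2 -> yb = 1 - b ^+ 2 -> 0 < yb ->
  ca * (1 + (ca * ya + al * a - al * b - q * yb)) <= q ->
  ca * (1 + ca * ya / 2) + ca * (b - a) * (ca * (a + b) / 2 - al) <= q + q ^+ 2 * yb / 2.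
Proof.
move=> ha hb yb0 h.
have h2 : 0 <= (q - ca) ^+ 2 * yb by rewrite mulr_ge0 ?sqr_ge0 ?ltW.
rewrite ha in h *; rewrite hb in h h2 *. nra.
Qed.

Lemma tangent (K al a b wa wb : R) : 0 < K -> -1 < a -> a < 1 -> -1 < b -> b < 1 ->
  0 < wa -> 0 < wb ->
  wa * expR wa = K * (1 - a ^+ 2) * expR (- (al * a)) ->
  wb * expR wb = K * (1 - b ^+ 2) * expR (- (al * b)) ->
  (wa + wa ^+ 2 / 2) / (1 - a ^+ 2) +
    wa / (1 - a ^+ 2) * (b - a) * (wa / (1 - a ^+ 2) * (a + b) / 2 - al)
  <= (wb + wb ^+ 2 / 2) / (1 - b ^+ 2).
Proof.
move=> K0 a1 a2 b1 b2 wa0 wb0 ea eb.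
have ya0 : 0 < 1 - a ^+ 2 by nra.
have yb0 : 0 < 1 - b ^+ 2 by nra.
have [ya yaE] : exists ya : R, ya = 1 - a ^+ 2 by eexists.
have [yb ybE] : exists yb : R, yb = 1 - b ^+ 2 by eexists.
rewrite -yaE -ybE in ea eb ya0 yb0 *.
have [ca caE] : exists ca : R, ca = wa / ya by eexists.
have [q qE] : exists q : R, q = wb / yb by eexists.
rewrite -caE.
have wae : wa = ca * ya by rewrite caE divfK // gt_eqF.
have wbe : wb = q * yb by rewrite qE divfK // gt_eqF.
have E : q = ca * expR (ca * ya + al * a - al * b - q * yb).
  rewrite -wae -wbe !expRD !expRN.
  have hwb : wb = K * yb * expR (- (al * b)) / expR wb.
    by rewrite -eb mulfK // gt_eqF ?expR_gt0.
  have hK : K = wa * expR wa / (ya * expR (- (al * a))).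
    by rewrite ea; field; rewrite !gt_eqF ?expR_gt0.
  rewrite qE {1}hwb hK !expRN caE.
  have e1 := expR_gt0 wa; have e2 := expR_gt0 (al * a); have e3 := expR_gt0 (al * b); have e4 := expR_gt0 wb.
  move: (expR wa) (expR (al * a)) (expR (al * b)) (expR wb) e1 e2 e3 e4 => E1 E2 E3 E4 h1 h2 h3 h4.
  field.
  by rewrite !gt_eqF ?expR_gt0.
have h : ca * (1 + (ca * ya + al * a - al * b - q * yb)) <= q.
  rewrite [in X in _ <= X]E ler_pM2l ?expR_ge1Dx //.
  by rewrite caE divr_gt0.
have := core ca q ya yb a b al yaE ybE yb0 h.
have -> : (wa + wa ^+ 2 / 2) / ya = ca * (1 + ca * ya / 2).
  by rewrite wae; field; rewrite gt_eqF.
have -> : (wb + wb ^+ 2 / 2) / yb = q + q ^+ 2 * yb / 2.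
  by rewrite wbe; field; rewrite gt_eqF.
by [].
Qed.

End S2.

Section S3.
Variable R : realType.
Local Open Scope classical_set_scope.
Local Notation mu := (@lebesgue_measure R).

Lemma integral_normal_prob (m s : R) (f : R -> \bar R) (U : set R) : measurable U -> measurable_fun U f ->
  (\int[normal_prob m s]_(x in U) `|f x| < +oo)%E ->
  (\int[normal_prob m s]_(x in U) f x =
   \int[mu]_(x in U) (f x * (normal_pdf m s x)%:E))%E.
Proof.
move=> mU mf finf.
rewrite -(Radon_Nikodym_change_of_variables (normal_prob_dominates m s))//=; last first.
  by apply/integrableP; split.
apply: ae_eq_integral => //.
- apply: emeasurable_funM => //; apply: (measurable_int mu).
  apply: (integrableS _ _ (@subsetT _ _)) => //=.
  by apply: Radon_Nikodym_integrable; exact: normal_prob_dominates.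
- apply: emeasurable_funM => //=; apply/measurableT_comp => //=.
  by apply/measurable_funTS; exact: measurable_normal_pdf.
- apply: ae_eqe_mul2l => /=.
  rewrite Radon_NikodymE//=; first exact: normal_prob_dominates.
  move=> abmu.
  case: cid => /= h [h1 h2 h3].
  apply: integral_ae_eq => //=.
  + exact: integrableS h2.
  + by apply/measurable_funTS/measurableT_comp =>//; exact: measurable_normal_pdf.
  + by move=> E E01 mE; rewrite -h3.
Qed.

End S3.

Section S4.
Variable R : realType.
Local Open Scope classical_set_scope.
Local Notation mu := (@lebesgue_measure R).

Lemma pdf1 (m x : R) : normal_pdf m 1 x = normal_peak 1 * expR (- (x - m) ^+ 2 / 2).
Proof. by rewrite /normal_pdf oner_eq0 /normal_fun expr1n. Qed.

Lemma gauss_bound (y s w : R) : 0 < y -> 0 < s -> 0 < w -> w * expR w = s ^+ 2 * y ->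
  0 < fine (\int[normal_prob 0 1]_x (expR (- (y * expR (s * x))))%:E)%E /\
  fine (\int[normal_prob 0 1]_x (expR (- (y * expR (s * x))))%:E)%E
    <= expR (- (w + w ^+ 2 / 2) / s ^+ 2).
Proof.
move=> y0 s0 w0 hw.
have NsetT : normal_prob (0:R) 1 setT = 1%E by exact: probability_setT.
set h := fun x : R => expR (- (y * expR (s * x))).
have mh : measurable_fun setT h.
  rewrite /h; apply: measurableT_comp; first exact: measurable_expR.
  apply: measurableT_comp; first exact: oppr_measurable.
  apply: (@measurable_funM _ _ _ _ (cst y) (fun x => expR (s * x))) => //.
  apply: measurableT_comp; first exact: measurable_expR.
  exact: (@measurable_funM _ _ _ _ (cst s) id).
have h0 x : 0 < h x by rewrite expR_gt0.
have h1 x : h x <= 1.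
  rewrite /h -expR0 ler_expR oppr_le0 mulr_ge0 ?expR_ge0 //; exact: ltW.
set I := (\int[normal_prob 0 1]_x (h x)%:E)%E.
have I0 : (0 <= I)%E by apply: integral_ge0 => x _; rewrite lee_fin ltW.
have I1 : (I <= 1)%E.
  apply: (@le_trans _ _ (\int[normal_prob (0:R) 1]_x (cst 1%E x))%E).
    apply: ge0_le_integral => //.
    - by move=> x _; rewrite lee_fin ltW.
    - exact/measurable_EFinP.
    - by move=> x _; rewrite lee_fin.
  rewrite integral_cst // mul1e.
  apply: (@le_trans _ _ (normal_prob (0:R) 1 setT)); first exact: lexx.
  by rewrite NsetT.
have Ifin : I \is a fin_num by rewrite ge0_fin_numE // (le_lt_trans I1) ?ltry.
split.
  apply: fine_gt0; rewrite (le_lt_trans I1) ?ltry // andbT lt0e I0 andbT.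
  apply/eqP => I00.
  have : (\int[normal_prob (0:R) 1]_(x in setT) `|(h x)%:E|)%E = 0.
    by rewrite -I00; apply: eq_integral => x _; rewrite gee0_abs // lee_fin ltW.
  move/ae_eq_integral_abs => /(_ measurableT) [].
    exact/measurable_EFinP.
  move=> N [mN N0 sN].
  have : (normal_prob (0:R) 1 setT <= normal_prob 0 1 N)%E.
    apply: le_measure => //; rewrite ?inE //.
    move=> x _; apply: sN => /= H; have [hx] := H Logic.I.
    by have := h0 x; rewrite hx ltxx.
  have -> : normal_prob (0:R) 1 setT = 1%E by [].
  by rewrite N0 lee_fin ler10.
set A := expR (- (w + w ^+ 2 / 2) / s ^+ 2).
set c := w / s.
have mhE : measurable_fun setT (fun x => (h x)%:E) by exact/measurable_EFinP.
have IE : I = (\int[mu]_x ((h x)%:E * (normal_pdf 0 1 x)%:E))%E.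
  rewrite /I integral_normal_prob //.
  apply: (@le_lt_trans _ _ 1%E); last exact: ltry.
  rewrite (le_trans _ I1) // le_eqVlt; apply/orP; left; apply/eqP.
  by apply: eq_integral => x _; rewrite gee0_abs // lee_fin ltW.
have pw x : h x * normal_pdf 0 1 x <= A * normal_pdf (- c) 1 x.
  rewrite !pdf1 mulrCA [X in _ <= X]mulrCA.
  rewrite ler_wpM2l ?normal_peak_ge0 // /h /A -!expRD ler_expR.
  have ye : y = w * expR w / s ^+ 2 by rewrite hw; field; rewrite gt_eqF.
  have hy : w / s ^+ 2 * (1 + (w + s * x)) <= y * expR (s * x).
    have -> : y * expR (s * x) = w / s ^+ 2 * expR (w + s * x).
      by rewrite ye expRD; field; rewrite gt_eqF.
    rewrite ler_pM2l ?expR_ge1Dx //.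
    by rewrite divr_gt0 // exprn_gt0.
  have -> : - (w + w ^+ 2 / 2) / s ^+ 2 + - (x - - c) ^+ 2 / 2
     = - (w / s ^+ 2 * (1 + (w + s * x))) - x ^+ 2 / 2.
    by rewrite /c; field; rewrite gt_eqF.
  rewrite subr0. lra.
have Ile : (I <= A%:E)%E.
  rewrite IE.
  apply: (@le_trans _ _ (\int[mu]_x ((A * normal_pdf (- c) 1 x)%:E))%E).
    apply: ge0_le_integral => //.
    - by move=> x _; rewrite lee_fin mulr_ge0 ?normal_pdf_ge0 // ltW.
    - apply: emeasurable_funM => //; apply/measurable_EFinP.
      exact: measurable_normal_pdf.
    - apply/measurable_EFinP; apply: measurable_funM => //.
      exact: measurable_normal_pdf.
    - by move=> x _; rewrite -EFinM lee_fin pw.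
  have -> : (\int[mu]_x ((A * normal_pdf (- c) 1 x)%:E) =
     \int[mu]_x (A%:E * (normal_pdf (- c) 1 x)%:E))%E.
    by apply: eq_integral => x _; rewrite EFinM.
  rewrite integralZl //; last exact: integrable_normal_pdf.
  by rewrite integral_normal_pdf mule1.
by rewrite -lee_fin fineK.
Qed.
End S4.

Section S5.
Variable R : realType.

Lemma sign_lem (W0 rs rho w : R) : 0 < W0 -> -1 < rho -> rho < 1 -> 0 < w ->
  w * expR w = W0 * expR W0 * (1 - rho ^+ 2) * expR (- (W0 * rs * rho)) ->
  (rs <= rho -> W0 * rs * (1 - rho ^+ 2) <= rho * w) /\
  (rho <= rs -> rho * w <= W0 * rs * (1 - rho ^+ 2)).
Proof.
move=> W00 r1 r2 w0 hw.
have P0 : 0 < 1 - rho ^+ 2 by nra.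
have [P PE] : exists P : R, P = 1 - rho ^+ 2 by eexists.
rewrite -PE in hw P0 *.
have u0 : 0 < W0 * P by rewrite mulr_gt0.
have hu : W0 * P * expR (W0 * P) = W0 * expR W0 * P * expR (- (W0 * rho ^+ 2)).
  have -> : W0 * P = W0 + - (W0 * rho ^+ 2) by rewrite PE; ring.
  rewrite expRD PE; ring.
have pos : 0 < W0 * expR W0 * P by rewrite !mulr_gt0 ?expR_gt0.
have c1 : W0 * rs * rho <= W0 * rho ^+ 2 -> W0 * P <= w.
  move=> h; apply: xexp_le => //; rewrite hu hw ler_pM2l // ler_expR; lra.
have c2 : W0 * rho ^+ 2 <= W0 * rs * rho -> w <= W0 * P.
  move=> h; apply: xexp_le => //; rewrite hu hw ler_pM2l // ler_expR; lra.
split => h.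
- have [r0|r0] := leP 0 rho.
  + have k : W0 * rs * rho <= W0 * rho ^+ 2.
      have H : 0 <= rho * (rho - rs) by apply: mulr_ge0; lra.
      nra.
    have := c1 k => uw.
    have e1 : rho * (W0 * P) <= rho * w by rewrite ler_wpM2l.
    have e2 : 0 <= (rho - rs) * (W0 * P) by rewrite mulr_ge0 ?subr_ge0 // ltW.
    nra.
  + have k : W0 * rho ^+ 2 <= W0 * rs * rho.
      have H : 0 <= - rho * (rho - rs) by apply: mulr_ge0; lra.
      nra.
    have := c2 k => uw.
    have e1 : rho * (W0 * P) <= rho * w by rewrite ler_wnM2l // ltW.
    have e2 : 0 <= (rho - rs) * (W0 * P) by rewrite mulr_ge0 ?subr_ge0 // ltW.
    nra.
- have [r0|r0] := leP 0 rho.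
  + have k : W0 * rho ^+ 2 <= W0 * rs * rho.
      have H : 0 <= rho * (rs - rho) by apply: mulr_ge0; lra.
      nra.
    have := c2 k => uw.
    have e1 : rho * w <= rho * (W0 * P) by rewrite ler_wpM2l.
    have e2 : 0 <= (rs - rho) * (W0 * P) by rewrite mulr_ge0 ?subr_ge0 // ltW.
    nra.
  + have k : W0 * rs * rho <= W0 * rho ^+ 2.
      have H : 0 <= - rho * (rs - rho) by apply: mulr_ge0; lra.
      nra.
    have := c1 k => uw.
    have e1 : rho * w <= rho * (W0 * P) by rewrite ler_wnM2l // ltW.
    have e2 : 0 <= (rs - rho) * (W0 * P) by rewrite mulr_ge0 ?subr_ge0 // ltW.
    nra.
Qed.

End S5.

Section S6.
Variable R : realType.

Lemma F_inc (W0 rs a b wa wb : R) : 0 < W0 -> -1 < a -> a < b -> b < 1 -> rs <= a ->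
  0 < wa -> 0 < wb ->
  wa * expR wa = W0 * expR W0 * (1 - a ^+ 2) * expR (- (W0 * rs * a)) ->
  wb * expR wb = W0 * expR W0 * (1 - b ^+ 2) * expR (- (W0 * rs * b)) ->
  (wa + wa ^+ 2 / 2) / (1 - a ^+ 2) < (wb + wb ^+ 2 / 2) / (1 - b ^+ 2).
Proof.
move=> W00 a1 ab b1 ra wa0 wb0 ea eb.
have K0 : 0 < W0 * expR W0 by rewrite mulr_gt0 ?expR_gt0.
have a2 : a < 1 by lra.
have b0 : -1 < b by lra.
have Tg := @tangent R _ _ _ _ _ _ K0 a1 a2 b0 b1 wa0 wb0 ea eb.
have [s1 _] := @sign_lem R _ _ _ _ W00 a1 a2 wa0 ea.
have S := s1 ra.
have P0 : 0 < 1 - a ^+ 2 by nra.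
have ca0 : 0 < wa / (1 - a ^+ 2) by rewrite divr_gt0.
have S' : W0 * rs <= a * (wa / (1 - a ^+ 2)).
  by rewrite mulrA ler_pdivlMr.
have pos : 0 < wa / (1 - a ^+ 2) * (b - a) * (wa / (1 - a ^+ 2) * (a + b) / 2 - W0 * rs).
  have h1 : 0 < wa / (1 - a ^+ 2) * (b - a) by rewrite mulr_gt0 // subr_gt0.
  apply: mulr_gt0 => //. nra.
lra.
Qed.

Lemma F_dec (W0 rs a b wa wb : R) : 0 < W0 -> -1 < a -> a < b -> b < 1 -> b <= rs ->
  0 < wa -> 0 < wb ->
  wa * expR wa = W0 * expR W0 * (1 - a ^+ 2) * expR (- (W0 * rs * a)) ->
  wb * expR wb = W0 * expR W0 * (1 - b ^+ 2) * expR (- (W0 * rs * b)) ->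
  (wb + wb ^+ 2 / 2) / (1 - b ^+ 2) < (wa + wa ^+ 2 / 2) / (1 - a ^+ 2).
Proof.
move=> W00 a1 ab b1 rb wa0 wb0 ea eb.
have K0 : 0 < W0 * expR W0 by rewrite mulr_gt0 ?expR_gt0.
have a2 : a < 1 by lra.
have b0 : -1 < b by lra.
have Tg := @tangent R _ _ _ _ _ _ K0 b0 b1 a1 a2 wb0 wa0 eb ea.
have [_ s2] := @sign_lem R _ _ _ _ W00 b0 b1 wb0 eb.
have S := s2 rb.
have P0 : 0 < 1 - b ^+ 2 by nra.
have cb0 : 0 < wb / (1 - b ^+ 2) by rewrite divr_gt0.
have S' : b * (wb / (1 - b ^+ 2)) <= W0 * rs.
  by rewrite mulrA ler_pdivrMr.
have pos : 0 < wb / (1 - b ^+ 2) * (a - b) * (wb / (1 - b ^+ 2) * (b + a) / 2 - W0 * rs).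
  have h1 : wb / (1 - b ^+ 2) * (a - b) < 0 by rewrite pmulr_rlt0 // subr_lt0.
  have h2 : wb / (1 - b ^+ 2) * (b + a) / 2 - W0 * rs < 0 by nra.
  nra.
lra.
Qed.

Lemma F_low (W0 rs b wb : R) : 0 < W0 -> -1 < b -> b < 1 -> 0 < wb ->
  wb * expR wb = W0 * expR W0 * (1 - b ^+ 2) * expR (- (W0 * rs * b)) ->
  W0 + W0 ^+ 2 / 2 - (W0 * rs) ^+ 2 / 2 <= (wb + wb ^+ 2 / 2) / (1 - b ^+ 2).
Proof.
move=> W00 b1 b2 wb0 eb.
have K0 : 0 < W0 * expR W0 by rewrite mulr_gt0 ?expR_gt0.
have e0 : W0 * expR W0 = W0 * expR W0 * (1 - 0 ^+ 2) * expR (- (W0 * rs * 0)).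
  by rewrite expr0n /= subr0 mulr1 mulr0 oppr0 expR0 mulr1.
have Tg := @tangent R _ _ _ _ _ _ K0 (@ltrN10 R) (@ltr01 R) b1 b2 W00 wb0 e0 eb.
move: Tg; rewrite expr0n /= subr0 !divr1 add0r.
have : 0 <= (W0 * b - W0 * rs) ^+ 2 by apply: sqr_ge0.
nra.
Qed.

End S6.

Theorem proposition2 (R : realType) (T r nu mu x0 eta sigma s0 lambda gamma : R)
  (hT : 0 < T) (heta : 0 < eta) (hsigma : 0 < sigma) (hs0 : 0 < s0)
  (hlambda : 0 < lambda) (hgamma : 0 < gamma) :
  let d := dfun T r nu mu eta sigma s0 lambda gamma in
  let g := gfun T r nu mu eta sigma s0 lambda gamma in
  let p := pfun T r nu mu eta sigma s0 lambda gamma in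
  let V := Vfun T r nu mu eta sigma s0 lambda gamma x0 in
  let rs := rhostar T r nu mu eta sigma s0 lambda gamma in
  let c := expR (- r * T) * ((mu - r) ^+ 2 * T) / (2 * gamma * sigma ^+ 2) in
  (rs <= -1 ->
     forall a b : R, -1 < a -> a < b -> b < 1 -> d a < d b) /\
  (1 <= rs ->
     forall a b : R, -1 < a -> a < b -> b < 1 -> d b < d a) /\
  (-1 < rs < 1 ->
     (forall a b : R, -1 < a -> a < b -> b < rs -> d b < d a) /\
     (forall a b : R, rs < a -> a < b -> b < 1 -> d a < d b) /\
     d rs = d 0 - c /\
     g rs = g 0 - c /\
     (forall rho : R, -1 < rho < 1 ->
        d 0 - expR (- r * T) / (2 * gamma) * ((mu - r) / sigma) ^+ 2 * T <= p rho) /\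
     (forall rho : R, -1 < rho < 1 ->
        - (1 / gamma) * expR (- gamma * expR (r * T) * (x0 + d 0)) <= V rho)).
Proof.
move=> d g p V rs c.
set m := mpr r mu sigma.
set K := lambda * gamma * s0 * eta ^+ 2 * T * expR ((nu - eta ^+ 2 / 2) * T).
have K0 : 0 < K by rewrite /K !mulr_gt0 ?expR_gt0 ?exprn_gt0.
have [W00 hW0] := @lambertW_spec R _ K0.
set W0 := lambertW K in W00 hW0.
have rsE : rs = eta * T / W0 * m by [].
have alE : eta * T * m = W0 * rs by rewrite rsE; field; rewrite gt_eqF.
set C := expR (- r * T) / (gamma * eta ^+ 2 * T).
have C0 : 0 < C by rewrite /C divr_gt0 ?expR_gt0 // !mulr_gt0 // exprn_gt0.
have argE rho : s0 * eta ^+ 2 * T * expR (drift T r nu mu eta sigma rho) * theta lambda gamma rho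
   = W0 * expR W0 * (1 - rho ^+ 2) * expR (- (W0 * rs * rho)).
  rewrite hW0 -alE /K /drift /theta -/m.
  have -> : (nu - eta * rho * m - eta ^+ 2 / 2) * T = (nu - eta ^+ 2 / 2) * T + - (eta * T * m * rho) by ring.
  rewrite expRD; ring.
set wf := wfun T r nu mu eta sigma s0 lambda gamma.
have wP rho : -1 < rho -> rho < 1 ->
  0 < wf rho /\ wf rho * expR (wf rho) = W0 * expR W0 * (1 - rho ^+ 2) * expR (- (W0 * rs * rho)).
  move=> r1 r2; rewrite /wf /wfun argE; apply: lambertW_spec.
  rewrite !mulr_gt0 ?expR_gt0 //; nra.
have dE rho : -1 < rho -> rho < 1 -> d rho = C * ((wf rho + wf rho ^+ 2 / 2) / (1 - rho ^+ 2)).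
  move=> r1 r2; rewrite /d /dfun /theta -/wf /C.
  have P0 : 1 - rho ^+ 2 != 0 by rewrite gt_eqF //; nra.
  field; rewrite P0 !gt_eqF //.
have gE rho : -1 < rho -> rho < 1 -> g rho = C * ((wf rho * expR (eta ^+ 2 / 2 * T) + wf rho ^+ 2 / 2) / (1 - rho ^+ 2)).
  move=> r1 r2; rewrite /g /gfun /theta -/wf /C.
  have P0 : 1 - rho ^+ 2 != 0 by rewrite gt_eqF //; nra.
  field; rewrite P0 !gt_eqF //.
have m10 : (-1 : R) < 0 by rewrite ltrN10.
have w0E : wf 0 = W0.
  have [h1 h2] := wP 0 m10 ltr01.
  apply: xexp_inj => //; rewrite h2 expr0n /= subr0 mulr1 mulr0 oppr0 expR0 mulr1 //.
have d0E : d 0 = C * (W0 + W0 ^+ 2 / 2).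
  by rewrite dE // w0E expr0n /= subr0 divr1.
have g0E : g 0 = C * (W0 * expR (eta ^+ 2 / 2 * T) + W0 ^+ 2 / 2).
  by rewrite gE // w0E expr0n /= subr0 divr1.
have dlow rho : -1 < rho -> rho < 1 -> d 0 - C * (W0 * rs) ^+ 2 / 2 <= d rho.
  move=> r1 r2; have [h1 h2] := wP rho r1 r2.
  rewrite d0E dE // -mulrA -mulrBr ler_pM2l //.
  exact: F_low.
have cE : C * (W0 * rs) ^+ 2 / 2 = expR (- r * T) / (2 * gamma) * ((mu - r) / sigma) ^+ 2 * T.
  rewrite -alE /C /m /mpr; field; rewrite !gt_eqF //.
have cE' : C * (W0 * rs) ^+ 2 / 2 = c.
  by rewrite cE /c; field; rewrite !gt_eqF.
have pbound rho : -1 < rho -> rho < 1 -> d rho <= p rho.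
  move=> r1 r2.
  have [h1 _] := wP rho r1 r2.
  set y := theta lambda gamma rho * s0 * expR (drift T r nu mu eta sigma rho).
  set s := eta * Num.sqrt T.
  have P0 : 0 < 1 - rho ^+ 2 by nra.
  have y0 : 0 < y by rewrite /y /theta !mulr_gt0 ?expR_gt0.
  have sp : 0 < s by rewrite /s mulr_gt0 // sqrtr_gt0.
  have s2 : s ^+ 2 = eta ^+ 2 * T by rewrite /s exprMn sqr_sqrtr // ltW.
  have arg0 : 0 < s0 * eta ^+ 2 * T * expR (drift T r nu mu eta sigma rho) * theta lambda gamma rho.
    by rewrite /theta !mulr_gt0 ?expR_gt0 ?exprn_gt0.
  have [_ h2] := @lambertW_spec R _ arg0.
  have hw : wf rho * expR (wf rho) = s ^+ 2 * y.
    rewrite [LHS]h2 s2 /y; ring.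
  have [E0 Ele] := @gauss_bound R y s (wf rho) y0 sp h1 hw.
  have lnE : ln (fine (\int[normal_prob 0 1]_x (expR (- (y * expR (s * x))))%:E)%E)
      <= - (wf rho + wf rho ^+ 2 / 2) / s ^+ 2.
    rewrite -[X in _ <= X]expRK ler_ln // posrE expR_gt0 //.
  have -> : p rho = - (expR (- r * T) / (gamma * (1 - rho ^+ 2))) *
     ln (fine (\int[normal_prob 0 1]_x (expR (- (y * expR (s * x))))%:E)%E) by [].
  have -> : d rho = - (expR (- r * T) / (gamma * (1 - rho ^+ 2))) *
     (- (wf rho + wf rho ^+ 2 / 2) / s ^+ 2).
    rewrite dE // s2 /C; field; rewrite !gt_eqF //.
  apply: ler_wnM2l => //.
  rewrite oppr_le0 divr_ge0 ?expR_ge0 // mulr_ge0 // ltW //.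
have pb rho : -1 < rho -> rho < 1 ->
    d 0 - expR (- r * T) / (2 * gamma) * ((mu - r) / sigma) ^+ 2 * T <= p rho.
  move=> r1 r2; rewrite -cE; exact: le_trans (dlow rho r1 r2) (pbound rho r1 r2).
have dlt a b : -1 < a -> a < b -> b < 1 ->
   (rs <= a -> d a < d b) /\ (b <= rs -> d b < d a).
  move=> a1 ab b1.
  have a2 : a < 1 by lra.
  have b0 : -1 < b by lra.
  have [wa0 ea] := wP a a1 a2.
  have [wb0 eb] := wP b b0 b1.
  rewrite !dE //; split => h; rewrite ltr_pM2l //.
    exact: F_inc ea eb.
  exact: F_dec ea eb.
split.
  move=> h a b a1 ab b1; have [H _] := dlt a b a1 ab b1; apply: H; lra.
split.
  move=> h a b a1 ab b1; have [_ H] := dlt a b a1 ab b1; apply: H; lra.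
move=> /andP [rs1 rs2].
have wrsE : wf rs = W0 * (1 - rs ^+ 2).
  have [h1 h2] := wP rs rs1 rs2.
  apply: xexp_inj => //; first by rewrite mulr_gt0 //; nra.
  rewrite h2.
  have -> : W0 * (1 - rs ^+ 2) = W0 + - (W0 * rs * rs) by ring.
  rewrite expRD; ring.
have Prs : 1 - rs ^+ 2 != 0 by rewrite gt_eqF //; nra.
split.
  move=> a b a1 ab brs; have [_ H] := dlt a b a1 ab (lt_trans brs rs2); apply: H; lra.
split.
  move=> a b rsa ab b1; have [H _] := dlt a b (lt_trans rs1 rsa) ab b1; apply: H; lra.
split.
  rewrite dE // wrsE d0E -cE'; field; exact: Prs.
split.
  rewrite gE // wrsE g0E -cE'; field; exact: Prs.
split.
  move=> rho /andP [r1 r2]; exact: pb.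
move=> rho /andP [r1 r2].
have H := pb rho r1 r2.
rewrite /V /Vfun -/p -/m.
apply: ler_wnM2l.
  by rewrite oppr_le0 divr_ge0 // ltW.
rewrite ler_expR.
set cc := expR (- r * T) / (2 * gamma) * ((mu - r) / sigma) ^+ 2 * T in H.
have EE : expR (r * T) * expR (- r * T) = 1 by rewrite -expRD mulNr subrr expR0.
have G0 : 0 <= gamma * expR (r * T) by rewrite mulr_ge0 ?expR_ge0 // ltW.
have H2 := ler_wpM2l G0 H.
have H3 : gamma * expR (r * T) * cc = m ^+ 2 / 2 * T.
  rewrite /cc /m /mpr.
  have -> : gamma * expR (r * T) * (expR (- r * T) / (2 * gamma) * ((mu - r) / sigma) ^+ 2 * T)
     = (expR (r * T) * expR (- r * T)) * (((mu - r) / sigma) ^+ 2 / 2 * T).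
    by field; rewrite !gt_eqF.
  by rewrite EE mul1r.
have H4 : gamma * expR (r * T) * d 0 - gamma * expR (r * T) * (p rho) <= m ^+ 2 / 2 * T.
  rewrite -H3; move: H2; rewrite mulrBr; lra.
have -> : - gamma * expR (r * T) * (x0 + (p rho)) - m ^+ 2 / 2 * T =
  - gamma * expR (r * T) * (x0 + d 0) + ((gamma * expR (r * T) * d 0 - gamma * expR (r * T) * (p rho)) - m ^+ 2 / 2 * T) by ring.
rewrite gerDl; lra.
Qed.
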